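(* Let $\ell$ be any bounded proper binary scoring rule. Then there exists another proper binary scoring rule $\tilde\ell$ and a constant $c>0$ such that for every sufficiently large $T$ there exist forecasts $\mathbf{p}^{(T)}\in[0,1]^T$ and outcomes $\mathbf{x}^{(T)}\in\{0,1\}^T$ with $\mathrm{Reg}_\ell(\mathbf p^{(T)},\mathbf x^{(T)})=o(T)$ (as $T\to\infty$) but $\mathrm{Reg}_{\tilde\ell}(\mathbf p^{(T)},\mathbf x^{(T)})\ge cT$.
   Context: A binary scoring rule is a function $\ell:[0,1]\times\{0,1\}\to\mathbb{R}$. For $p,q\in[0,1]$ write $\ell(p;q)=(1-q)\ell(p,0)+q\ell(p,1)$. It is proper if $\ell(p;p)\le\ell(p';p)$ for all $p,p'\in[0,1]$, and bounded if all its values lie in $[-1,1]$. For outcomes $\mathbf x\in\{0,1\}^T$ and forecasts $\mathbf p\in[0,1]^T$, with base rate $\beta=\frac1T\sum_t x_t$, the regret is $\mathrm{Reg}_\ell(\mathbf p,\mathbf x)=\sum_{t=1}^T\ell(p_t,x_t)-\sum_{t=1}^T\ell(\beta,x_t)$. *)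

(* Defs.v *)
From mathcomp Require Import all_boot all_order all_algebra.
From mathcomp Require Import reals.
Set Implicit Arguments. Unset Strict Implicit. Unset Printing Implicit Defensive.
Import Order.TTheory GRing.Theory Num.Theory.
Local Open Scope ring_scope.

(* A binary scoring rule l : [0,1] x {0,1} -> R; outcomes encoded as bool
   (false = 0, true = 1); only values at p in [0,1] matter. *)
Definition exp_score {R : realType} (l : R -> bool -> R) (p q : R) : R :=
  (1 - q) * l p false + q * l p true.

Definition proper_rule {R : realType} (l : R -> bool -> R) : Prop :=
  forall p p' : R, 0 <= p <= 1 -> 0 <= p' <= 1 ->
    exp_score l p p <= exp_score l p' p.

Definition bounded_rule {R : realType} (l : R -> bool -> R) : Prop :=
  forall (p : R) (x : bool), 0 <= p <= 1 -> -1 <= l p x <= 1.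

Definition base_rate {R : realType} (T : nat) (x : nat -> bool) : R :=
  (\sum_(t < T) ((x t : nat)%:R : R)) / T%:R.

Definition regret {R : realType} (l : R -> bool -> R) (T : nat)
  (p : nat -> R) (x : nat -> bool) : R :=
  \sum_(t < T) l (p t) (x t) - \sum_(t < T) l (base_rate T x) (x t).

(* Main.v *)
Require Import Defs.
From mathcomp Require Import all_boot all_order all_algebra.
From mathcomp Require Import reals.
From mathcomp Require Import boolp classical_sets.
From mathcomp Require Import ring lra.
Import Order.TTheory GRing.Theory Num.Theory.
Local Open Scope classical_set_scope.
Local Open Scope ring_scope.



Definition sl {R : realType} (l : R -> bool -> R) p := l p true - l p false.

Lemma diff_bound {R : realType} (l : R -> bool -> R) (u v : R) (x : bool) :
  proper_rule l -> 0 <= u -> u <= v -> v <= 1 ->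
  0 <= sl l u - sl l v /\ `|l u x - l v x| <= sl l u - sl l v.
Proof.
move=> Hp u0 uv v1.
have P1 := Hp u v. have P2 := Hp v u.
rewrite /exp_score in P1 P2.
have h1 : 0 <= u <= 1 by apply/andP; split; lra.
have h2 : 0 <= v <= 1 by apply/andP; split; lra.
move: (P1 h1 h2) (P2 h2 h1) => Q1 Q2.
rewrite /sl.
have Hs : 0 <= (v - u) * ((l u true - l u false) - (l v true - l v false)) by nra.
have Hs' : 0 <= (l u true - l u false) - (l v true - l v false).
  move: uv; rewrite le_eqVlt => /orP[/eqP <-|huv]; first lra.
  nra.
split => //.
case: x.
  rewrite ger0_norm; nra.
rewrite ler0_norm; nra.
Qed.



Definition step {R : realType} (l : R -> bool -> R) (ab : R * R) : R * R :=
  let a := ab.1 in let b := ab.2 in let m := (a + b) / 2 in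
  let a' := a + (b - a) / 4 in let b' := b - (b - a) / 4 in
  if sl l a' - sl l m <= sl l m - sl l b' then (a', m) else (m, b').

Definition nest {R : realType} (l : R -> bool -> R) (k : nat) : R * R :=
  iter k (step l) (1/4, 3/4).

Lemma step_prop {R : realType} (l : R -> bool -> R) (a b : R) :
  proper_rule l -> 1/4 <= a -> a < b -> b <= 3/4 ->
  let ab := step l (a, b) in
  a < ab.1 /\ ab.1 < ab.2 /\ ab.2 < b /\
  (sl l ab.1 - sl l ab.2) * 2 <= sl l a - sl l b.
Proof.
move=> Hp ha hab hb /=; rewrite /step /=.
set m := (a + b) / 2; set a' := a + (b - a) / 4; set b' := b - (b - a) / 4.
have h1 : a <= a' by rewrite /a'; lra.
have h2 : a' <= m by rewrite /a' /m; lra.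
have h3 : m <= b' by rewrite /b' /m; lra.
have h4 : b' <= b by rewrite /b'; lra.
have D u v : u <= v -> 1/4 <= u -> v <= 3/4 -> 0 <= sl l u - sl l v.
  move=> uv hu hv; have u0 : 0 <= u by lra.
  have v1 : v <= 1 by lra.
  by have [] := diff_bound l u v true Hp u0 uv v1.
have d1 : 0 <= sl l a - sl l a' by apply: D => //; rewrite /a'; lra.
have d2 : 0 <= sl l a' - sl l m by apply: D => //; rewrite /a' /m; lra.
have d3 : 0 <= sl l m - sl l b' by apply: D => //; rewrite /b' /m; lra.
have d4 : 0 <= sl l b' - sl l b by apply: D => //; rewrite /b'; lra.
case: ifP => /= hc; (split; [rewrite /a' /m; lra|split; [rewrite /a' /m /b'; lra|split; [rewrite /b' /m; lra|lra]]]).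
all: try lra.
Qed.



Lemma nest_inv {R : realType} (l : R -> bool -> R) :
  proper_rule l -> bounded_rule l -> forall k,
  1/4 <= (nest l k).1 /\ (nest l k).1 < (nest l k).2 /\ (nest l k).2 <= 3/4 /\
  (sl l (nest l k).1 - sl l (nest l k).2) * 2 ^+ k <= 4 /\
  (nest l k).1 < (nest l k.+1).1 /\ (nest l k.+1).2 < (nest l k).2.
Proof.
move=> Hp Hb.
have S k : nest l k.+1 = step l ((nest l k).1, (nest l k).2).
  by rewrite /nest iterS; case: (iter k (step l) (1/4, 3/4)).
elim=> [|k [h1 [h2 [h3 [h4 _]]]]].
  rewrite S /nest /= expr0 mulr1.
  have q1 : (1/4 : R) <= 1/4 by lra.
  have q2 : (1/4 : R) < 3/4 by lra.
  have q3 : (3/4 : R) <= 3/4 by lra.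
  have [h5 [h6 [h7 _]]] := step_prop l (1/4) (3/4) Hp q1 q2 q3.
  have b1 : 0 <= (1/4 : R) <= 1 by apply/andP; split; lra.
  have b3 : 0 <= (3/4 : R) <= 1 by apply/andP; split; lra.
  have /andP[? ?] := Hb (1/4) true b1.
  have /andP[? ?] := Hb (1/4) false b1.
  have /andP[? ?] := Hb (3/4) true b3.
  have /andP[? ?] := Hb (3/4) false b3.
  rewrite /sl.
  do 3 (split; first by []); split; [lra|by split].
rewrite !S.
have [h5 [h6 [h7 h8]]] := step_prop l _ _ Hp h1 h2 h3.
set ab := step l _ in h5 h6 h7 h8 *.
have g1 : 1/4 <= ab.1 by lra.
have g2 : ab.2 <= 3/4 by lra.
have [h9 [h10 [h11 _]]] := step_prop l ab.1 ab.2 Hp g1 h6 g2.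
split; first lra. split; first lra. split; first lra.
split; last by [].
rewrite exprS.
have e : 0 < (2 : R) ^+ k by apply: exprn_gt0; lra.
nra.
Qed.

Lemma nest_mono {R : realType} (l : R -> bool -> R) :
  proper_rule l -> bounded_rule l -> forall i j, (i <= j)%N ->
  (nest l i).1 <= (nest l j).1 /\ (nest l j).2 <= (nest l i).2.
Proof.
move=> Hp Hb i j /subnK <-; elim: (j - i)%N => [|d [IH1 IH2]] /=; first by rewrite add0n.
have [_ [_ [_ [_ [h1 h2]]]]] := nest_inv l Hp Hb (d + i).
split; [apply: le_trans IH1 (ltW h1)|apply: le_trans (ltW h2) IH2].
Qed.

Lemma nest_ab {R : realType} (l : R -> bool -> R) :
  proper_rule l -> bounded_rule l -> forall i j, (nest l i).1 < (nest l j).2.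
Proof.
move=> Hp Hb i j.
have [m1 _] := nest_mono l Hp Hb _ _ (leq_maxl i j).
have [_ m2] := nest_mono l Hp Hb _ _ (leq_maxr i j).
have [_ [h _]] := nest_inv l Hp Hb (maxn i j).
by apply: le_lt_trans m1 (lt_le_trans h m2).
Qed.

Definition beta {R : realType} (l : R -> bool -> R) : R :=
  sup [set x | exists k, x = (nest l k).1].

Lemma beta_prop {R : realType} (l : R -> bool -> R) :
  proper_rule l -> bounded_rule l -> forall k,
  (nest l k).1 < beta l < (nest l k).2.
Proof.
move=> Hp Hb k.
set E := [set x | exists k, x = (nest l k).1].
have ub j : ubound E (nest l j).2.
  by move=> y [i ->]; apply: ltW; exact: nest_ab.
have ne : E !=set0 by exists (nest l 0).1; exists 0%N.
have hs : has_sup E by split => //; exists (nest l 0).2; apply: ub.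
have [_ [_ [_ [_ [h1 h2]]]]] := nest_inv l Hp Hb k.
apply/andP; split.
  apply: lt_le_trans h1 _; apply: sup_upper_bound hs _ _; by exists k.+1.
apply: le_lt_trans h2; exact: ge_sup ne (ub k.+1).
Qed.



Lemma sum_split {R : realType} (F : bool -> R) (n T : nat) : (n <= T)%N ->
  \sum_(t < T) F (t < n)%N = n%:R * F true + (T - n)%:R * F false.
Proof.
move=> nT.
rewrite -(big_mkord xpredT (fun t => F (t < n)%N)).
rewrite (big_cat_nat (leq0n n) nT).
rewrite !mulr_natl -[in F true *+ n](subn0 n) -!sumr_const_nat.
congr (_ + _); apply: eq_big_nat => i /andP[h1 h2].
  by rewrite h2.
by rewrite ltnNge h1.
Qed.

Lemma lt_proper {R : realType} (b : R) :
  proper_rule (fun p (x : bool) => if p < b then (if x then 1 - b else - b)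
                    else if b < p then (if x then b - 1 else b) else 0).
Proof.
move=> p p' _ _; rewrite /exp_score.
case: (ltrgtP p b) => h1; case: (ltrgtP p' b) => h2 /=.
all: try (have -> : (1 - p) * - b + p * (1 - b) = p - b by ring).
all: try (have -> : (1 - p) * b + p * (b - 1) = b - p by ring).
all: try (have -> : (1 - p) * 0 + p * 0 = 0 by ring).
all: try (have -> : (1 - p) * 0 + p * 0 = 0 :> R by ring).
all: try lra.
Qed.

Lemma close {R : realType} (l : R -> bool -> R) (k : nat) (u v : R) (x : bool) :
  proper_rule l -> bounded_rule l ->
  (nest l k).1 <= u -> u <= (nest l k).2 ->
  (nest l k).1 <= v -> v <= (nest l k).2 ->
  `|l u x - l v x| <= sl l (nest l k).1 - sl l (nest l k).2.
Proof.
move=> Hp Hb.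
have [h1 [h2 [h3 _]]] := nest_inv l Hp Hb k.
have main u' v' : u' <= v' -> (nest l k).1 <= u' -> v' <= (nest l k).2 ->
    `|l u' x - l v' x| <= sl l (nest l k).1 - sl l (nest l k).2.
  move=> uv au vb.
  have a0 : 0 <= (nest l k).1 by lra.
  have u0 : 0 <= u' by lra.
  have v0 : 0 <= v' by lra.
  have b1 : (nest l k).2 <= 1 by lra.
  have v1 : v' <= 1 by lra.
  have u1 : u' <= 1 by lra.
  have [_ e1] := diff_bound l u' v' x Hp u0 uv v1.
  have [e2 _] := diff_bound l (nest l k).1 u' x Hp a0 au u1.
  have [e3 _] := diff_bound l v' (nest l k).2 x Hp v0 vb b1.
  lra.
move=> au ub av vb.
case: (lerP u v) => h; first exact: main.
by rewrite distrC; apply: main => //; apply: ltW.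
Qed.



Theorem theorem3p2 (R : realType) (l : R -> bool -> R) :
  proper_rule l -> bounded_rule l ->
  exists (lt : R -> bool -> R) (c : R),
    proper_rule lt /\ 0 < c /\
    exists (T0 : nat) (p : nat -> nat -> R) (x : nat -> nat -> bool),
      (forall T t : nat, (T0 <= T)%N -> (t < T)%N -> 0 <= p T t <= 1) /\
      (forall eps : R, 0 < eps -> exists N : nat, forall T : nat,
          (N <= T)%N -> `|regret l T (p T) (x T)| <= eps * T%:R) /\
      (forall T : nat, (T0 <= T)%N -> c * T%:R <= regret lt T (p T) (x T)).
Proof.
move=> Hp Hb.
set b := beta l.
have Bk k : (nest l k).1 < b < (nest l k).2 := beta_prop l Hp Hb k.
have Ninv := nest_inv l Hp Hb.
have [b14 b34] : 1/4 < b /\ b < 3/4.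
  have /andP[u v] := Bk 0%N; have [w1 [_ [w3 _]]] := Ninv 0%N; split; lra.
set lt := (fun p (x : bool) => if p < b then (if x then 1 - b else - b)
                    else if b < p then (if x then b - 1 else b) else 0).
exists lt, (1/4); split; first exact: lt_proper.
split; first lra.
pose n1 (T : nat) := Num.truncn (b * T%:R).
exists 8%N, (fun T t => if (t < n1 T)%N then b - (T%:R)^-1 else b + (T%:R)^-1),
  (fun T t => (t < n1 T)%N).
have FT T : (0 < T)%N -> [/\ 0 < T%:R :> R, T%:R * (T%:R)^-1 = 1 :> R,
     0 < (T%:R)^-1 :> R, (n1 T)%:R <= b * T%:R & b * T%:R < (n1 T)%:R + 1].
  move=> T0; have Tp : 0 < T%:R :> R by rewrite ltr0n.
  have bT : 0 <= b * T%:R by apply: mulr_ge0; lra.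
  have /andP[t1 t2] := truncn_itv bT.
  split => //; first by rewrite mulfV // gt_eqF.
    by rewrite invr_gt0.
  by rewrite natr1.
have nT T : (0 < T)%N -> (n1 T <= T)%N.
  move=> T0; have [Tp _ _ t1 _] := FT T T0.
  rewrite -(ler_nat R); nra.
split.
  move=> T t T8 _.
  have T0 : (0 < T)%N by apply: leq_trans T8.
  have [Tp e ip _ _] := FT T T0.
  have T8r : (8%:R : R) <= T%:R by rewrite ler_nat.
  have iT8 : (T%:R)^-1 <= 1/8 :> R by nra.
  by case: ifP => _; apply/andP; split; lra.
split; last first.
  move=> T T8.
  have T0 : (0 < T)%N by apply: leq_trans T8.
  have [Tp e ip t1 t2] := FT T T0.
  have nT' := nT T T0.
  rewrite /regret /=.
  set iT := (T%:R)^-1 in e ip *.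
  set n := n1 T in t1 t2 nT' *.
  rewrite (sum_split (fun c => lt (if c then b - iT else b + iT) c)) //.
  have br : base_rate T (fun t => (t < n)%N) = n%:R * iT.
    by rewrite /base_rate (sum_split (fun c : bool => (c : nat)%:R)) //= mulr1 mulr0 addr0.
  rewrite br (sum_split (fun c => lt (n%:R * iT) c)) // natrB //.
  have nb : n%:R * iT <= b by nra.
  have h1 : b - iT < b by lra.
  have h2 : (b + iT < b) = false by apply/negbTE; rewrite -leNgt; lra.
  have h3 : b < b + iT by lra.
  rewrite /lt h1 h2 h3.
  have n0 : 0 <= n%:R :> R by [].
  have Tn : n%:R <= T%:R :> R by rewrite ler_nat.
  case: (ltrgtP (n%:R * iT) b) => hc; [|lra|]; nra.
move=> eps he.
pose k := Num.bound (4 / eps).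
have hk : 4 / eps < k%:R by apply: archi_boundP; apply: divr_ge0; lra.
have [_ [_ [_ [hD _]]]] := Ninv k.
have k2 : k%:R < (2:R) ^+ k by rewrite -natrX ltr_nat ltn_expl.
have e4 : eps * (4 / eps) = 4 by rewrite mulrC divfK // gt_eqF.
have p2 : 0 < (2:R) ^+ k by apply: exprn_gt0; lra.
have Dk : sl l (nest l k).1 - sl l (nest l k).2 <= eps by nra.
have /andP[Bk1 Bk2] := Bk k.
set ak := (nest l k).1 in Bk1 Dk *.
set bk := (nest l k).2 in Bk2 Dk *.
pose N := maxn 8 (maxn (Num.bound ((b - ak)^-1)) (Num.bound ((bk - b)^-1))).
exists N => T TN.
have T0 : (0 < T)%N by apply: leq_trans TN; rewrite leq_max.
have [Tp e ip t1 t2] := FT T T0.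
have nT' := nT T T0.
have g1 : (b - ak)^-1 < T%:R.
  apply: lt_le_trans (archi_boundP _) _; first by rewrite invr_ge0; lra.
  by rewrite ler_nat (leq_trans _ TN) // /N leq_max leq_max leqnn orbT.
have g2 : (bk - b)^-1 < T%:R.
  apply: lt_le_trans (archi_boundP _) _; first by rewrite invr_ge0; lra.
  by rewrite ler_nat (leq_trans _ TN) // /N leq_max leq_max leqnn !orbT.
have g1' : (b - ak)^-1 * (b - ak) = 1 by rewrite mulVf // gt_eqF // subr_gt0.
have g2' : (bk - b)^-1 * (bk - b) = 1 by rewrite mulVf // gt_eqF // subr_gt0.
set iT := (T%:R)^-1 in e ip *.
have i1 : iT < b - ak by nra.
have i2 : iT < bk - b by nra.
rewrite /regret -sumrB.
apply: le_trans (ler_norm_sum _ _ _) _.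
apply: (@le_trans _ _ (\sum_(t < T) (sl l ak - sl l bk))).
  apply: ler_sum => t _.
  have bb1 : ak <= base_rate T (fun t => (t < n1 T)%N).
    rewrite /base_rate (sum_split (fun c : bool => (c : nat)%:R)) //= mulr1 mulr0 addr0.
    rewrite -/iT; nra.
  have bb2 : base_rate T (fun t => (t < n1 T)%N) <= bk.
    rewrite /base_rate (sum_split (fun c : bool => (c : nat)%:R)) //= mulr1 mulr0 addr0.
    rewrite -/iT; nra.
  apply: close => //; case: ifP => _; lra.
rewrite sumr_const card_ord -mulr_natr.
nra.
Qed.
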